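(* Let $q$ be a prime power, $1\le k$, $d\ge1$, $k+d<n\le m$, let $g_1,\dots,g_n\in\mathbb{F}_{q^m}$ be linearly independent over $\mathbb{F}_q$, and let $\mathcal{G}$ be the Gabidulin code of dimension $k$ with respect to $g_1,\dots,g_n$. Let $$f(x)=x^{q^{k+d}}-a_1x^{q^{k+d-1}}+a_2x^{q^{k+d-2}}-\cdots+(-1)^da_dx^{q^k}+\sum_{i=0}^{k-1}c_ix^{q^i}$$ with $a_j,c_i\in\mathbb{F}_{q^m}$, and $\sigma_f=(f(g_1),\dots,f(g_n))$. Then $d_R(\sigma_f,\mathcal{G})=n-(k+d)$ if and only if there exist $\mathbb{F}_q$-linearly independent $\beta_1,\dots,\beta_{k+d}\in\langle g_1,\dots,g_n\rangle$ such that for all $1\le i\le d$, $$a_i=\frac{\det\mathcal{R}_{k+d-i}(\beta_1,\dots,\beta_{k+d})}{\det M_{k+d}(\beta_1,\dots,\beta_{k+d})}.$$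
   Context: For $\beta_1,\dots,\beta_s\in\mathbb{F}_{q^m}$, the $t\times s$ Moore matrix $M_t(\beta_1,\dots,\beta_s)$ has $(i,j)$ entry $\beta_j^{q^{i-1}}$, $1\le i\le t$. For $0\le j\le s$, $\mathcal{R}_j(\beta_1,\dots,\beta_s)$ denotes the $s\times s$ matrix obtained from $M_{s+1}(\beta_1,\dots,\beta_s)$ by deleting the row $(\beta_1^{q^j},\dots,\beta_s^{q^j})$. $\mathcal{L}_q(x,\mathbb{F}_{q^m})$ is the set of $q$-linearized polynomials $\sum_i a_ix^{q^i}$ over $\mathbb{F}_{q^m}$, $q$-degree being the largest $i$ with $a_i\ne0$. Rank distance: $d_R(\mathbf{u},\mathbf{v})=\dim_{\mathbb{F}_q}\langle u_1-v_1,\dots,u_n-v_n\rangle$, $d_R(\mathbf{u},C)=\min_{\mathbf{c}\in C}d_R(\mathbf{u},\mathbf{c})$. The Gabidulin code of dimension $k$ is $\mathcal{G}=\{(v(g_1),\dots,v(g_n)) : v\in\mathcal{L}_q(x,\mathbb{F}_{q^m}),\ v=0\text{ or }\deg_q(v)<k\}$. *)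

(* Defs.v *)
(* F_q = K (a finite field, q := #|K|), F_{q^m} = L, a finite
   field extension of K with m := \dim {:L} (its dimension over K). *)
From HB Require Import structures.
From mathcomp Require Import all_boot all_order all_algebra all_field.
Set Implicit Arguments. Unset Strict Implicit. Unset Printing Implicit Defensive.
Import GRing.Theory.
Local Open Scope ring_scope.

Definition rkv (K : fieldType) (L : fieldExtType K) (n : nat) (u : 'I_n -> L) : nat :=
  \dim <<[seq u i | i : 'I_n]>>%VS.

Definition dR (K : fieldType) (L : fieldExtType K) (n : nat) (u v : 'I_n -> L) : nat :=
  rkv (fun i => u i - v i).

Definition dR_code_is (K : fieldType) (L : fieldExtType K) (n : nat)
  (u : 'I_n -> L) (C : ('I_n -> L) -> Prop) (r : nat) : Prop :=
  (exists2 c, C c & dR u c = r) /\ (forall c, C c -> (r <= dR u c)%N).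

(* Gabidulin code of dimension k w.r.t. g: evaluations of q-linearized
   polynomials v(x) = sum_{j<k} v_j x^{q^j} (i.e. v = 0 or deg_q v < k) *)
Definition gabidulin (K : finFieldType) (L : fieldExtType K) (n : nat)
  (g : 'I_n -> L) (k : nat) (c : 'I_n -> L) : Prop :=
  exists v : 'I_k -> L, forall i, c i = \sum_(j < k) v j * g i ^+ (#|K| ^ j)%N.

Definition moore (K : finFieldType) (L : fieldExtType K) (t s : nat)
  (b : 'I_s -> L) : 'M[L]_(t, s) :=
  \matrix_(i < t, j < s) b j ^+ (#|K| ^ i)%N.

(* R_j(b_1..b_s): M_{s+1}(b) with the row (b^{q^j}) deleted (0 <= j <= s) *)
Definition Rdel (K : finFieldType) (L : fieldExtType K) (s : nat) (j : nat)
  (b : 'I_s -> L) : 'M[L]_s :=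
  \matrix_(i < s, l < s) b l ^+ (#|K| ^ bump j i)%N.

(* f(x) = x^{q^{k+d}} + sum_{j=1}^d (-1)^j a_j x^{q^{k+d-j}} + sum_{i<k} c_i x^{q^i},
   with a_j stored as a (j-1) *)
Definition fpoly (K : finFieldType) (L : fieldExtType K) (k d : nat)
  (a : 'I_d -> L) (c : 'I_k -> L) (x : L) : L :=
  x ^+ (#|K| ^ (k + d))%N
  + \sum_(j < d) (-1) ^+ j.+1 * a j * x ^+ (#|K| ^ (k + d - j.+1))%N
  + \sum_(i < k) c i * x ^+ (#|K| ^ i)%N.

(* Main.v *)
Require Import Defs.
From HB Require Import structures.
From mathcomp Require Import all_boot all_order all_algebra all_field fingroup pgroup abelian.
From mathcomp Require Import zify ring.
Set Implicit Arguments. Unset Strict Implicit. Unset Printing Implicit Defensive.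
Import GRing.Theory.
Local Open Scope ring_scope.

Lemma freePf (K : fieldType) (L : fieldExtType K) t (b : 'I_t -> L) :
  free [seq b i | i : 'I_t] -> forall k : 'I_t -> K, \sum_i k i *: b i = 0 -> forall i, k i = 0.
Proof.
move=> fb k hk.
have := @freeP _ _ t [tuple b i | i < t].
have -> : free [tuple b i | i < t] = free [seq b i | i : 'I_t].
  by [].
move/(_ fb) => H; apply: H.
rewrite -[RHS]hk; apply: eq_bigr => i _.
by rewrite (nth_map i) ?size_enum_ord // nth_ord_enum.
Qed.

Lemma count_roots (K : finFieldType) (L : fieldExtType K) t (b : 'I_t -> L)
  (p : {poly L}) :
  free [seq b i | i : 'I_t] -> p != 0 ->
  (forall c : {ffun 'I_t -> K}, root p (\sum_i c i *: b i)) ->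
  (#|K| ^ t < size p)%N.
Proof.
move=> fb p0 hr.
pose rs := [seq \sum_i (c : {ffun 'I_t -> K}) i *: b i | c <- enum {: {ffun 'I_t -> K}}].
have -> : (#|K| ^ t)%N = size rs.
  by rewrite size_map -cardE card_ffun card_ord.
apply: max_poly_roots => //.
  by apply/allP => x /mapP [c _ ->].
rewrite map_inj_uniq ?enum_uniq // => c1 c2 e.
apply/ffunP => i; apply/eqP; rewrite -subr_eq0; apply/eqP.
have H := @freePf _ _ _ _ fb (fun i => c1 i - c2 i).
apply: H.
under eq_bigr do rewrite scalerBl.
by rewrite sumrB e subrr.
Qed.
Lemma frobD (K : finFieldType) (L : fieldExtType K) j (x y : L) :
  (x + y) ^+ (#|K| ^ j) = x ^+ (#|K|^j) + y ^+ (#|K|^j).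
Proof.
have [p pr_p pK] := finPcharP K.
apply: exprDn_pchar.
have pL : [pchar L] =i (p : nat_pred).
  by move=> r; rewrite (pchar_lalg L) (pcharf_eq pK).
rewrite (eq_pnat _ pL) pnatX.
have := abelem_pgroup (fin_ring_pchar_abelem pK).
by rewrite /pgroup cardsT => ->.
Qed.

Lemma frobZ (K : finFieldType) (L : fieldExtType K) j (c : K) (x : L) :
  (c *: x) ^+ (#|K| ^ j) = c *: x ^+ (#|K|^j).
Proof.
rewrite exprZn; congr (_ *: _).
elim: j => [|j IH]; first by rewrite expr1.
by rewrite expnS exprM expf_card.
Qed.

Definition lsum (K : finFieldType) (L : fieldExtType K) (I : finType)
  (w : I -> L) (e : I -> nat) (x : L) : L := \sum_(i : I) w i * x ^+ (#|K| ^ e i).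
Definition lpol (K : finFieldType) (L : fieldExtType K) (I : finType)
  (w : I -> L) (e : I -> nat) : {poly L} := \sum_(i : I) w i *: 'X^(#|K| ^ e i).

Lemma lpolE (K : finFieldType) (L : fieldExtType K) (I : finType) w e x :
  (@lpol K L I w e).[x] = lsum w e x.
Proof.
rewrite /lpol /lsum horner_sum; apply: eq_bigr => i _.
by rewrite hornerZ hornerXn.
Qed.

Lemma lpol_size (K : finFieldType) (L : fieldExtType K) (I : finType) w e M :
  (forall i, e i <= M)%N -> (size (@lpol K L I w e) <= (#|K| ^ M).+1)%N.
Proof.
move=> hM; rewrite /lpol; apply: (big_ind (fun p : {poly L} => size p <= (#|K| ^ M).+1)%N).
- by rewrite size_poly0.
- by move=> p1 p2 h1 h2; rewrite (leq_trans (size_polyD _ _)) // geq_max h1 h2.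
move=> i _; rewrite (leq_trans (size_scale_leq _ _)) // size_polyXn ltnS leq_exp2l //.
exact: finNzRing_gt1.
Qed.

Lemma lpol_coef (K : finFieldType) (L : fieldExtType K) (I : finType) w e m :
  (@lpol K L I w e)`_m = \sum_(i | (#|K| ^ e i)%N == m) w i.
Proof.
rewrite /lpol coef_sum [RHS]big_mkcond /=; apply: eq_bigr => i _.
by rewrite coefZ coefXn eq_sym; case: eqP; rewrite ?mulr1 ?mulr0.
Qed.

Lemma lsumD (K : finFieldType) (L : fieldExtType K) (I : finType) w e x y :
  @lsum K L I w e (x + y) = lsum w e x + lsum w e y.
Proof.
by rewrite /lsum -big_split /=; apply: eq_bigr => i _; rewrite frobD mulrDr.
Qed.

Lemma lsumZ (K : finFieldType) (L : fieldExtType K) (I : finType) w e (c : K) x :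
  @lsum K L I w e (c *: x) = c *: lsum w e x.
Proof.
by rewrite /lsum scaler_sumr; apply: eq_bigr => i _; rewrite frobZ scalerAr.
Qed.

Lemma lin_combos (K : finFieldType) (L : fieldExtType K) t (T : L -> L) (b : 'I_t -> L) :
  (forall x y, T (x + y) = T x + T y) -> (forall (c : K) x, T (c *: x) = c *: T x) ->
  (forall i, T (b i) = 0) -> forall c : 'I_t -> K, T (\sum_i c i *: b i) = 0.
Proof.
move=> hD hZ hb c.
have T0 : T 0 = 0 by have := hZ 0 0; rewrite !scale0r.
apply: (big_ind (fun y => T y = 0)) => //.
  by move=> y z hy hz; rewrite hD hy hz addr0.
by move=> i _; rewrite hZ hb scaler0.
Qed.

Lemma q_gt1 (K : finFieldType) : (1 < #|K|)%N.
Proof. exact: finNzRing_gt1. Qed.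

Lemma qpow_gap (K : finFieldType) s : (0 < s)%N -> ((#|K| ^ s.-1).+1 <= #|K| ^ s)%N.
Proof.
case: s => // s _ /=; rewrite expnS.
have q1 := q_gt1 K; have : (0 < #|K| ^ s)%N by rewrite expn_gt0 ltnW.
set y := (#|K| ^ s)%N; set q := #|K| in q1 *.
move=> y0; apply: (@leq_trans (2 * y)).
  by rewrite mul2n -addnn -addn1 leq_add2l.
by rewrite leq_mul2r q1 orbT.
Qed.

Lemma lowpoly_zero (K : finFieldType) (L : fieldExtType K) s (b : 'I_s -> L) (p : {poly L}) :
  (0 < s)%N -> free [seq b i | i : 'I_s] ->
  (size p <= (#|K| ^ s.-1).+1)%N ->
  (forall c : {ffun 'I_s -> K}, root p (\sum_i c i *: b i)) -> p = 0.
Proof.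
move=> s0 fb hs hr; apply/eqP/negPn/negP => pn0.
have := count_roots fb pn0 hr.
by rewrite ltnNge (leq_trans hs (qpow_gap K s0)).
Qed.

Lemma moore_det_neq0 (K : finFieldType) (L : fieldExtType K) s (b : 'I_s -> L) :
  free [seq b i | i : 'I_s] -> \det (moore s b) != 0.
Proof.
move=> fb; apply/negP => /det0P [v v0 vM].
case: s b fb v v0 vM => [|s] b fb v v0 vM.
  by move: v0; rewrite thinmx0 eqxx.
pose p := lpol (fun i : 'I_s.+1 => v 0 i) (fun i => val i).
have hroot : forall l, lsum (fun i : 'I_s.+1 => v 0 i) (fun i => val i) (b l) = 0.
  move=> l; have := congr1 (fun M : 'M[L]_(1, s.+1) => M 0 l) vM; rewrite !mxE => <-.
  by apply: eq_bigr => i _; rewrite mxE.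
have pz : p = 0.
  apply: (lowpoly_zero (b := b)) => //.
    by apply: lpol_size => i; rewrite -ltnS ltn_ord.
  move=> c; rewrite rootE /p lpolE.
  apply/eqP; exact: (@lin_combos K L _ (lsum (fun i : 'I_s.+1 => v 0 i) (fun i => val i)) b (@lsumD _ _ _ _ _) (@lsumZ _ _ _ _ _) hroot c).
move/negP: v0; apply; apply/eqP/rowP => i; rewrite mxE.
have := congr1 (fun p : {poly L} => p`_(#|K| ^ i)) pz.
rewrite lpol_coef coef0 (big_pred1 i) // => j /=.
by rewrite eqn_exp2l ?q_gt1.
Qed.

Lemma moore_laplace (K : finFieldType) (L : fieldExtType K) s (b : 'I_s -> L) (l0 : 'I_s) :
  \sum_(j < s) b l0 ^+ (#|K| ^ j) * ((-1) ^+ (s + j) * \det (Rdel j b))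
  + b l0 ^+ (#|K| ^ s) * \det (moore s b) = 0.
Proof.
pose A := \matrix_(i < s.+1, j < s.+1)
   (if unlift ord_max i is Some i' then b i' else b l0) ^+ (#|K| ^ j).
have A0 : \det A = 0.
  apply: (@determinant_alternate _ _ A (lift ord_max l0) ord_max).
    by rewrite eq_sym neq_lift.
  by move=> j; rewrite !mxE liftK unlift_none.
have hR : forall j : 'I_s.+1, row' ord_max (col' j A) = (Rdel j b)^T.
  move=> j; apply/matrixP => i l; rewrite !mxE liftK.
  by [].
rewrite (expand_det_row A ord_max) big_ord_recr /= in A0.
rewrite -[RHS]A0; congr (_ + _).
  apply: eq_bigr => j _; rewrite /cofactor hR det_tr !mxE unlift_none.
  by [].
rewrite /cofactor hR det_tr !mxE unlift_none.
rewrite -signr_odd addnn odd_double expr0 mul1r.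
congr (_ * \det _); apply/matrixP => i l; rewrite !mxE.
by rewrite /bump leqNgt ltn_ord add0n.
Qed.

Definition Tsh (K : finFieldType) (L : fieldExtType K) (k d : nat)
  (A : 'I_d -> L) (C : 'I_k -> L) (x : L) : L :=
  x ^+ (#|K| ^ (k + d)) + lsum A (fun j : 'I_d => (k + d - j.+1)%N) x
  + lsum C (fun i : 'I_k => val i) x.

Lemma fpoly_Tsh (K : finFieldType) (L : fieldExtType K) (k d : nat)
  (a : 'I_d -> L) (c : 'I_k -> L) x :
  fpoly a c x = Tsh (fun j => (-1) ^+ j.+1 * a j) c x.
Proof. by []. Qed.

Lemma Tsh_linear (K : finFieldType) (L : fieldExtType K) (k d : nat)
  (A : 'I_d -> L) (C : 'I_k -> L) : linear (Tsh A C).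
Proof.
move=> c x y; rewrite /Tsh !lsumD !lsumZ frobD frobZ.
rewrite !scalerDr; ring.
Qed.

HB.instance Definition _ (K : finFieldType) (L : fieldExtType K) (k d : nat)
  (A : 'I_d -> L) (C : 'I_k -> L) :=
  GRing.isLinear.Build K L L *:%R (Tsh A C) (Tsh_linear A C).

Lemma rank_shape (K : finFieldType) (L : fieldExtType K) (k d : nat)
  (A : 'I_d -> L) (C : 'I_k -> L) n (g : 'I_n -> L) :
  free [seq g i | i : 'I_n] ->
  (rkv (fun i => Tsh A C (g i)) +
   \dim (<<[seq g i | i : 'I_n]>> :&: lker (linfun (Tsh A C))) = n)%N.
Proof.
move=> fg; rewrite /rkv.
have -> : [seq Tsh A C (g i) | i : 'I_n] = map (linfun (Tsh A C)) [seq g i | i : 'I_n].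
  by rewrite -map_comp; apply: eq_map => i /=; rewrite lfunE.
by rewrite -limg_span addnC limg_ker_dim (eqP fg) size_map size_enum_ord.
Qed.

Definition Plow (K : finFieldType) (L : fieldExtType K) (k d : nat)
  (A : 'I_d -> L) (C : 'I_k -> L) : {poly L} :=
  lpol A (fun j : 'I_d => (k + d - j.+1)%N) + lpol C (fun i : 'I_k => val i).

Lemma Plow_size (K : finFieldType) (L : fieldExtType K) (k d : nat)
  (A : 'I_d -> L) (C : 'I_k -> L) :
  (size (Plow A C) <= (#|K| ^ (k + d).-1).+1)%N.
Proof.
rewrite /Plow (leq_trans (size_polyD _ _)) // geq_max.
apply/andP; split; apply: lpol_size => i /=.
  by have := ltn_ord i; lia.
by have := ltn_ord i; lia.
Qed.

Lemma Plow_horner (K : finFieldType) (L : fieldExtType K) (k d : nat)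
  (A : 'I_d -> L) (C : 'I_k -> L) x :
  (Plow A C).[x] = lsum A (fun j : 'I_d => (k + d - j.+1)%N) x + lsum C (fun i : 'I_k => val i) x.
Proof. by rewrite hornerD !lpolE. Qed.

Lemma ker_bound (K : finFieldType) (L : fieldExtType K) (k d : nat)
  (A : 'I_d -> L) (C : 'I_k -> L) t (b : 'I_t -> L) :
  (0 < k + d)%N -> free [seq b i | i : 'I_t] ->
  (forall i, Tsh A C (b i) = 0) -> (t <= k + d)%N.
Proof.
move=> s0 fb hb.
pose p := 'X^(#|K| ^ (k + d)) + Plow A C.
have sp : size p = (#|K| ^ (k + d)).+1.
  rewrite /p size_addl size_polyXn //.
  apply: (leq_trans (Plow_size A C)); have := qpow_gap K s0; lia.
have pn0 : p != 0 by rewrite -size_poly_eq0 sp.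
have := count_roots fb pn0.
have hr : forall c : {ffun 'I_t -> K}, root p (\sum_i c i *: b i).
  move=> c; rewrite rootE /p hornerD hornerXn Plow_horner addrA.
  apply/eqP; apply: (lin_combos (T := Tsh A C)) => //.
    by move=> x y; rewrite raddfD.
  by move=> c0 x; rewrite linearZ.
move/(_ hr); rewrite sp ltnS leq_exp2l //; exact: q_gt1.
Qed.

Lemma low_zero (K : finFieldType) (L : fieldExtType K) (k d : nat)
  (A : 'I_d -> L) (C : 'I_k -> L) (b : 'I_(k + d) -> L) :
  (0 < k + d)%N -> free [seq b i | i : 'I_(k + d)] ->
  (forall i, lsum A (fun j : 'I_d => (k + d - j.+1)%N) (b i)
             + lsum C (fun i : 'I_k => val i) (b i) = 0) ->
  forall j, A j = 0.
Proof.
move=> s0 fb hb j.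
have pz : Plow A C = 0.
  apply: (lowpoly_zero s0 fb (Plow_size A C)) => c.
  rewrite rootE Plow_horner; apply/eqP.
  apply: (lin_combos (T := fun x => lsum A (fun j : 'I_d => (k + d - j.+1)%N) x
             + lsum C (fun i : 'I_k => val i) x)) => //.
    by move=> x y; rewrite !lsumD; ring.
  by move=> c0 x; rewrite !lsumZ scalerDr.
have := congr1 (fun p : {poly L} => p`_(#|K| ^ (k + d - j.+1))) pz.
rewrite coefD !lpol_coef coef0 (big_pred1 j) ?big_pred0 ?addr0 //.
  move=> i /=; rewrite eqn_exp2l ?q_gt1 //.
  by have := ltn_ord i; have := ltn_ord j; lia.
move=> i /=; rewrite eqn_exp2l ?q_gt1 //.
apply/eqP/eqP => [|->] //.
by have := ltn_ord i; have := ltn_ord j; move=> h1 h2 h3; apply: val_inj => /=; lia.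
Qed.

Definition pcf (K : finFieldType) (L : fieldExtType K) s (b : 'I_s -> L) (j : nat) : L :=
  (-1) ^+ (s + j) * \det (Rdel j b) / \det (moore s b).


Lemma subspace_poly (K : finFieldType) (L : fieldExtType K) (k d : nat)
  (b : 'I_(k + d) -> L) :
  free [seq b i | i : 'I_(k + d)] ->
  forall l, Tsh (fun j : 'I_d => pcf b (k + d - j.+1)) (fun i : 'I_k => pcf b i) (b l) = 0.
Proof.
move=> fb l; have M0 := moore_det_neq0 fb.
set x := b l.
pose G := fun j : nat => x ^+ (#|K| ^ j) * ((-1) ^+ (k + d + j) * \det (Rdel j b)).
have hL := moore_laplace b l; rewrite -/x in hL.
have hG : \sum_(j < k + d) G j = \sum_(i < k) G i + \sum_(j < d) G (k + d - j.+1)%N.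
  rewrite big_split_ord /=; congr (_ + _).
  rewrite (reindex_inj rev_ord_inj) /=; apply: eq_bigr => j _.
  by congr (G _); have := ltn_ord j; lia.
apply/eqP; rewrite -(mulIr_eq0 _ (mulIf M0)) /= -hL.
have -> : \sum_(j < k + d) x ^+ (#|K| ^ j) * ((-1) ^+ (k + d + j) * \det (Rdel j b))
        = \sum_(j < k + d) G j by [].
rewrite hG /Tsh /lsum !mulrDl !mulr_suml.
have h1 : \sum_(j < d) pcf b (k + d - j.+1) * x ^+ (#|K| ^ (k + d - j.+1)) * \det (moore (k + d) b)
   = \sum_(j < d) G (k + d - j.+1)%N.
  apply: eq_bigr => j _; rewrite /G /pcf.
  by rewrite mulrAC divfK // mulrC.
have h2 : \sum_(i < k) pcf b i * x ^+ (#|K| ^ i) * \det (moore (k + d) b)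
   = \sum_(i < k) G i.
  apply: eq_bigr => i _; rewrite /G /pcf.
  by rewrite mulrAC divfK // mulrC.
rewrite h1 h2; apply/eqP; ring.
Qed.

Lemma sign_eq (L : fieldType) s j : (j < s)%N ->
  (-1) ^+ (s + (s - j.+1)) = (-1) ^+ j.+1 :> L.
Proof.
move=> hj; rewrite -signr_odd -[RHS]signr_odd oddD oddB //.
by rewrite addbA addbb.
Qed.

Lemma rkv_ext (K : fieldType) (L : fieldExtType K) n (u u' : 'I_n -> L) :
  (forall i, u i = u' i) -> rkv u = rkv u'.
Proof. by move=> h; rewrite /rkv /image_mem (eq_map h). Qed.

Lemma lsum_ext (K : finFieldType) (L : fieldExtType K) (I : finType) w w' e x :
  (forall i, w i = w' i) -> @lsum K L I w e x = lsum w' e x.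
Proof. by move=> h; apply: eq_bigr => i _; rewrite h. Qed.

Lemma lsumB (K : finFieldType) (L : fieldExtType K) (I : finType) w w' e x :
  @lsum K L I w e x - lsum w' e x = lsum (fun i => w i - w' i) e x.
Proof. by rewrite /lsum -sumrB; apply: eq_bigr => i _; rewrite mulrBl. Qed.

Lemma dimker_bound (K : finFieldType) (L : fieldExtType K) (k d : nat)
  (A : 'I_d -> L) (C : 'I_k -> L) (U : {vspace L}) :
  (0 < k + d)%N -> (\dim (U :&: lker (linfun (Tsh A C))) <= k + d)%N.
Proof.
move=> s0; set W := (U :&: _)%VS.
apply: (ker_bound (A := A) (C := C) (b := tnth (vbasis W))) => //.
  have -> : [seq tnth (vbasis W) i | i : 'I_(\dim W)] = map (tnth (vbasis W)) (enum 'I_(\dim W)) by [].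
  by rewrite map_tnth_enum; exact: basis_free (vbasisP W).
move=> i; have := vbasis_mem (mem_tnth i (vbasis W)).
by case/memv_capP => _; rewrite memv_ker lfunE => /eqP.
Qed.

Lemma lower_bound (K : finFieldType) (L : fieldExtType K) (k d : nat)
  (A : 'I_d -> L) (C : 'I_k -> L) n (g : 'I_n -> L) :
  (0 < k + d)%N -> free [seq g i | i : 'I_n] ->
  (n - (k + d) <= rkv (fun i => Tsh A C (g i)))%N.
Proof.
move=> s0 fg; have h1 := rank_shape A C fg.
have h2 := dimker_bound A C <<[seq g i | i : 'I_n]>>%VS s0.
move: h1 h2; set D := \dim _; set R := rkv _; lia.
Qed.

Lemma codeword_Tsh (K : finFieldType) (L : fieldExtType K) (k d : nat)
  (a : 'I_d -> L) (c : 'I_k -> L) (v : 'I_k -> L) x :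
  fpoly a c x - \sum_(j < k) v j * x ^+ (#|K| ^ j)%N
  = Tsh (fun j => (-1) ^+ j.+1 * a j) (fun i => c i - v i) x.
Proof.
rewrite fpoly_Tsh /Tsh -addrA -[in RHS]lsumB.
by rewrite /lsum addrA.
Qed.

Lemma Tsh_ext (K : finFieldType) (L : fieldExtType K) (k d : nat)
  (A A2 : 'I_d -> L) (C C2 : 'I_k -> L) x :
  (forall j, A j = A2 j) -> (forall i, C i = C2 i) -> Tsh A C x = Tsh A2 C2 x.
Proof. by move=> hA hC; rewrite /Tsh (lsum_ext _ _ hA) (lsum_ext _ _ hC). Qed.

Unset Implicit Arguments.

Theorem mainTheorem8 (K : finFieldType) (L : fieldExtType K) (n k d : nat)
  (g : 'I_n -> L) (a : 'I_d -> L) (c : 'I_k -> L) :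
  (1 <= k)%N -> (1 <= d)%N -> (k + d < n)%N -> (n <= \dim {:L})%N ->
  free [seq g i | i : 'I_n] ->
  (dR_code_is (fun i => fpoly a c (g i)) (gabidulin g k) (n - (k + d))
   <->
   exists b : 'I_(k + d) -> L,
     [/\ free [seq b i | i : 'I_(k + d)],
         (forall i, b i \in <<[seq g j | j : 'I_n]>>%VS) &
         (forall i : 'I_d,
            a i = \det (Rdel (k + d - i.+1) b) / \det (moore (k + d) b))]).
Proof.
move=> k1 d1 hn hm fg.
have s0 : (0 < k + d)%N by lia.
pose A' := fun j : 'I_d => (-1) ^+ j.+1 * a j.
split.
- case=> [[c0 [v hv] hc0] _].
  pose C' := fun i => c i - v i.
  have hr : rkv (fun i => Tsh A' C' (g i)) = (n - (k + d))%N.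
    by rewrite -hc0 /dR; apply: rkv_ext => i; rewrite hv codeword_Tsh.
  set W := (<<[seq g i | i : 'I_n]>> :&: lker (linfun (Tsh A' C')))%VS.
  have hW : \dim W = (k + d)%N.
    have := rank_shape A' C' fg; rewrite -/W hr; lia.
  have := vbasisP W; move: (vbasis W); rewrite hW => X hX.
  have fX : free [seq tnth X i | i : 'I_(k + d)].
    have -> : [seq tnth X i | i : 'I_(k + d)] = map (tnth X) (enum 'I_(k + d)) by [].
    by rewrite map_tnth_enum; exact: basis_free hX.
  have hk : forall l, Tsh A' C' (tnth X l) = 0.
    move=> l; have := basis_mem hX (mem_tnth l X).
    by case/memv_capP => _; rewrite memv_ker lfunE => /eqP.
  exists (tnth X); split => //.
    by move=> i; have := basis_mem hX (mem_tnth i X); case/memv_capP.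
  move=> j.
  have hs := subspace_poly fX.
  have e : forall x, (lsum A' (fun j : 'I_d => (k + d - j.+1)%N) x
     - lsum (fun j : 'I_d => pcf (tnth X) (k + d - j.+1)) (fun j : 'I_d => (k + d - j.+1)%N) x)
     + (lsum C' (fun i : 'I_k => val i) x - lsum (fun i : 'I_k => pcf (tnth X) i) (fun i : 'I_k => val i) x)
     = Tsh A' C' x - Tsh (fun j : 'I_d => pcf (tnth X) (k + d - j.+1)) (fun i : 'I_k => pcf (tnth X) i) x.
    by move=> x; rewrite /Tsh; ring.
  have := @low_zero K L k d (fun j => A' j - pcf (tnth X) (k + d - j.+1))
     (fun i => C' i - pcf (tnth X) i) (tnth X) s0 fX.
  have hz : forall l, lsum (fun j : 'I_d => A' j - pcf (tnth X) (k + d - j.+1))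
                        (fun j : 'I_d => (k + d - j.+1)%N) (tnth X l)
       + lsum (fun i : 'I_k => C' i - pcf (tnth X) i) (fun i : 'I_k => val i) (tnth X l) = 0.
    by move=> l; have := e (tnth X l); rewrite !lsumB hk hs subrr.
  move=> /(_ hz j) /eqP; rewrite subr_eq0 /A' /pcf sign_eq ?ltn_addl ?ltn_ord //.
  rewrite -mulrA => /eqP h.
  by rewrite -[a j](signrMK j.+1) h signrMK.
- case=> b [fb hbV ha].
  pose Ab := fun j : 'I_d => pcf b (k + d - j.+1).
  pose Cb := fun i : 'I_k => pcf b i.
  split.
  + exists (fun i => \sum_(j < k) (c j - Cb j) * g i ^+ (#|K| ^ j)%N).
      by exists (fun j => c j - Cb j).
    rewrite /dR (rkv_ext (u' := fun i => Tsh Ab Cb (g i))); last first.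
      move=> i; rewrite codeword_Tsh; apply: Tsh_ext => [j|i0].
        rewrite /A' ha /Ab /pcf sign_eq ?ltn_addl ?ltn_ord //.
        by rewrite mulrA.
      by rewrite subKr.
    have h1 := rank_shape Ab Cb fg.
    have h2 := dimker_bound Ab Cb <<[seq g i | i : 'I_n]>>%VS s0.
    set W := (<<[seq g i | i : 'I_n]>> :&: lker (linfun (Tsh Ab Cb)))%VS in h1 h2.
    have h3 : (k + d <= \dim W)%N.
      have <- : \dim <<[seq b i | i : 'I_(k + d)]>> = (k + d)%N.
        by rewrite (eqP fb) size_image card_ord.
      apply: dimvS; apply/span_subvP => x /imageP [i _ ->].
      apply/memv_capP; split; first exact: hbV.
      by rewrite memv_ker lfunE; apply/eqP; exact: (subspace_poly fb i).
    move: h1 h2 h3; set R := rkv _; set D := \dim W; lia.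
  + move=> c0 [v hv]; rewrite /dR.
    rewrite (rkv_ext (u' := fun i => Tsh A' (fun i => c i - v i) (g i))).
      exact: lower_bound.
    by move=> i; rewrite hv codeword_Tsh.
Qed.
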